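(* Let $(\Omega,\mathcal{F},\mathbb{P})$ be a probability space and let $X,Y$ be real-valued random variables with $\mathbb{E}[|X|]<\infty$ and $\mathbb{E}[|Y|]<\infty$. For such a random variable $Z$ define the mean absolute deviation $\mathrm{MAD}(Z):=\mathbb{E}\big[|Z-\mathbb{E}[Z]|\big]$. Then $$\mathrm{MAD}(X+Y)=\mathrm{MAD}(X)+\mathrm{MAD}(Y)$$ if and only if $$(X-\mathbb{E}[X])(Y-\mathbb{E}[Y])\geq 0 \quad \mathbb{P}\text{-almost surely}.$$ *)

(* Defs.v *)
From HB Require Import structures.
From mathcomp Require Import all_boot all_order all_algebra.
From mathcomp Require Import all_classical all_reals all_analysis.
Set Implicit Arguments. Unset Strict Implicit. Unset Printing Implicit Defensive.
Import Order.TTheory GRing.Theory Num.Theory.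
Local Open Scope ring_scope.
Local Open Scope ereal_scope.

(* Mean absolute deviation MAD(Z) := E[ |Z - E[Z]| ].  For integrable Z,
   E[Z] is a finite extended real, so [fine] recovers the real mean. *)
Definition MAD d (T : measurableType d) (R : realType) (P : probability T R)
  (Z : T -> R) : \bar R :=
  'E_P[fun w => `|Z w - fine 'E_P[Z]|%R].

(* Main.v *)
Require Import Defs.
From HB Require Import structures.
From mathcomp Require Import all_boot all_order all_algebra.
From mathcomp Require Import all_classical all_reals all_analysis.
From mathcomp Require Import lra.
Import Order.TTheory GRing.Theory Num.Theory.
Local Open Scope classical_set_scope.
Local Open Scope ring_scope.

Lemma pt (R : realDomainType) (a b : R) :
  `|a| + `|b| - `|a + b| = 0 <-> 0 <= a * b.
Proof.
case: (lerP 0 a) => ha; [rewrite (ger0_norm ha)|rewrite (ltr0_norm ha)];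
case: (lerP 0 b) => hb; [rewrite (ger0_norm hb)|rewrite (ltr0_norm hb)| rewrite (ger0_norm hb)|rewrite (ltr0_norm hb)];
case: (lerP 0 (a+b)) => hab; (try rewrite (ger0_norm hab)); (try rewrite (ltr0_norm hab)); split => h; nra.
Qed.

Lemma g0 (R : realDomainType) (a b : R) : 0 <= `|a| + `|b| - `|a + b|.
Proof. rewrite subr_ge0; exact: ler_normD. Qed.

Theorem theorem1 (d : measure_display) (T : measurableType d) (R : realType)
  (P : probability T R) (X Y : {RV P >-> R})
  (hX : P.-integrable [set: T] (EFin \o X))
  (hY : P.-integrable [set: T] (EFin \o Y)) :
  MAD P (X \+ Y) = (MAD P X + MAD P Y)%E <->
  {ae P, forall w, 0 <= (X w - fine 'E_P[X]) * (Y w - fine 'E_P[Y])}.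
Proof.
have EXY : fine 'E_P[X \+ Y] = fine 'E_P[X] + fine 'E_P[Y].
  rewrite unlock (integralD_EFin measurableT hX hY) fineD//; exact: integrable_fin_num.
rewrite /MAD EXY.
set mX := fine 'E_P[X]; set mY := fine 'E_P[Y].
set a := fun w => X w - mX; set b := fun w => Y w - mY.
have ia : P.-integrable [set: T] (EFin \o a).
  have := integrableB measurableT hX (finite_measure_integrable_cst P mX measurableT).
  by apply: eq_integrable => // w _.
have ib : P.-integrable [set: T] (EFin \o b).
  have := integrableB measurableT hY (finite_measure_integrable_cst P mY measurableT).
  by apply: eq_integrable => // w _.
have iab : P.-integrable [set: T] (EFin \o (a \+ b)).
  have := integrableD measurableT ia ib.
  by apply: eq_integrable => // w _.
have abs_int (f : T -> R) : P.-integrable [set: T] (EFin \o f) ->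
    P.-integrable [set: T] (EFin \o (fun w => `|f w|)).
  move=> /integrable_abse; by apply: eq_integrable => // w _.
have -> : (fun w => `|X w + Y w - (mX + mY)|) = (fun w => `|a w + b w|).
  by apply: funext => w; rewrite /a /b; congr `|_|; lra.
rewrite unlock.
set g : T -> R := fun w => `|a w| + `|b w| - `|a w + b w|.
have ig : (\int[P]_w (g w)%:E = \int[P]_w (`|a w|)%:E + \int[P]_w (`|b w|)%:E
           - \int[P]_w (`|a w + b w|)%:E)%E.
  rewrite /g.
  rewrite (_ : (fun w => _) = (fun w => ((`|a w| + `|b w|)%:E - (`|a w + b w|)%:E)%E)); last first.
    by apply: funext => w; rewrite EFinB.
  rewrite integralB_EFin//; last first.
  - exact: (abs_int (a \+ b)).
  - have := integrableD measurableT (abs_int _ ia) (abs_int _ ib).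
    by apply: eq_integrable => // w _.
  rewrite (_ : (fun w => _) = (fun w => ((`|a w|)%:E + (`|b w|)%:E)%E)); last first.
    by apply: funext => w; rewrite EFinD.
  by rewrite integralD_EFin//; [exact: abs_int|exact: abs_int].
have fa := integrable_fin_num measurableT (abs_int _ ia).
have fb := integrable_fin_num measurableT (abs_int _ ib).
have fab := integrable_fin_num measurableT (abs_int (a \+ b) iab).
have igg : P.-integrable [set: T] (EFin \o g).
  have := integrableB measurableT (integrableD measurableT (abs_int _ ia) (abs_int _ ib)) (abs_int _ iab).
  by apply: eq_integrable => // w _; rewrite /g /= EFinB EFinD.
have key : (\int[P]_w (`|a w + b w|)%:E = \int[P]_w (`|a w|)%:E + \int[P]_w (`|b w|)%:E)%E
   <-> (\int[P]_w `|(EFin \o g) w| = 0)%E.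
  rewrite (_ : (fun w => `|(EFin \o g) w|)%E = fun w => (g w)%:E); last first.
    by apply: funext => w; rewrite /= ger0_norm// g0.
  rewrite ig; split => [->|h].
    by rewrite subee// fin_numD fa fb.
  move: h fa fb fab.
  set A := (\int[P]_w _)%E; set B := (\int[P]_w _)%E; set C := (\int[P]_w _)%E.
  rewrite /= -/A -/B -/C.
  move=> h fa fb fab.
  rewrite -(fineK fa) -(fineK fb) -(fineK fab) in h *.
  move: h; rewrite -EFinD => -[h]; rewrite -EFinD; congr EFin; lra.
apply: (iff_trans key); rewrite ae_eq_integral_abs//; last exact: (measurable_int P igg).
split => h; apply: filterS h => w /=.
  by move=> /(_ I) [] /pt.
by move=> h _; congr EFin; apply/pt.
Qed.
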